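(* Let $Q\subset\mathbb R^2$ be an $\mathbb R$-unimodular copy of the unit square $[0,1]^2$, and let $P\subset\mathbb R^2$ be a parallelogram such that the relative interior of each of the four facets of $P$ contains exactly one vertex of $Q$ (distinct facets containing distinct vertices). Then $P$ is $\mathbb R$-$\Delta_2$-free and inclusion-maximal among $\mathbb R$-$\Delta_2$-free convex sets.
   Context: $\Delta_2=\mathrm{conv}(\mathbf 0,e_1,e_2)$. An $\mathbb R$-unimodular copy of $X$ is $T(X)$ where $T(x)=Mx+b$, $M\in\mathrm{GL}_2(\mathbb Z)$, $b\in\mathbb R^2$. A convex set is $\mathbb R$-$\Delta_2$-free if its relative interior contains no $\mathbb R$-unimodular copy of $\Delta_2$. *)

(* Defs.v *)
From mathcomp Require Import all_boot all_order all_algebra.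
From mathcomp Require Import classical_sets reals.
Set Implicit Arguments. Unset Strict Implicit. Unset Printing Implicit Defensive.
Import Order.TTheory GRing.Theory Num.Theory.
Local Open Scope ring_scope.
Local Open Scope classical_set_scope.

Section Defs.
Variable R : realType.

Definition pt := (R * R)%type.
Definition padd (p q : pt) : pt := (p.1 + q.1, p.2 + q.2).
Definition pscale (t : R) (p : pt) : pt := (t * p.1, t * p.2).
Definition pcomb (t : R) (p q : pt) : pt := padd (pscale (1 - t) p) (pscale t q).

Definition convex_set (K : set pt) : Prop :=
  forall p q t, K p -> K q -> 0 <= t <= 1 -> K (pcomb t p q).

Definition affine_set (A : set pt) : Prop :=
  forall p q t, A p -> A q -> A (pcomb t p q).

Definition aff_hull (K : set pt) : set pt :=
  fun x => forall A, affine_set A -> K `<=` A -> A x.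

Definition relint (K : set pt) : set pt :=
  fun x => K x /\ exists e : R, 0 < e /\
    forall y, aff_hull K y -> (y.1 - x.1) ^+ 2 + (y.2 - x.2) ^+ 2 < e ^+ 2 -> K y.

Definition umap (m11 m12 m21 m22 : int) (b : pt) (x : pt) : pt :=
  (m11%:~R * x.1 + m12%:~R * x.2 + b.1, m21%:~R * x.1 + m22%:~R * x.2 + b.2).

Definition unimodular (m11 m12 m21 m22 : int) : Prop :=
  m11 * m22 - m12 * m21 = 1 \/ m11 * m22 - m12 * m21 = -1.

Definition Delta2 : set pt := fun x => 0 <= x.1 /\ 0 <= x.2 /\ x.1 + x.2 <= 1.

Definition R_Delta2_free (K : set pt) : Prop :=
  convex_set K /\
  ~ (exists (m11 m12 m21 m22 : int) (b : pt),
        unimodular m11 m12 m21 m22 /\ umap m11 m12 m21 m22 b @` Delta2 `<=` relint K).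

Definition max_R_Delta2_free (K : set pt) : Prop :=
  R_Delta2_free K /\ forall K', R_Delta2_free K' -> K `<=` K' -> K' = K.

Definition parallelogram (v a b : pt) : set pt :=
  fun x => exists s t : R, 0 <= s <= 1 /\ 0 <= t <= 1 /\
    x = padd v (padd (pscale s a) (pscale t b)).

Definition pcorner (v a b : pt) (i : nat) : pt :=
  match i with
  | 0 => v
  | 1 => padd v a
  | 2 => padd v (padd a b)
  | _ => padd v b
  end.

(* relative interior of the segment [p,q] (p <> q): the open segment *)
Definition open_segment (p q : pt) : set pt :=
  fun x => exists t : R, 0 < t < 1 /\ x = pcomb t p q.

Definition facet_relint (v a b : pt) (i : 'I_4) : set pt :=
  open_segment (pcorner v a b i) (pcorner v a b ((i.+1) %% 4)).

Definition square_corner (j : nat) : pt :=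
  match j with
  | 0 => (0, 0)
  | 1 => (1, 0)
  | 2 => (1, 1)
  | _ => (0, 1)
  end.

End Defs.

(* Main.v *)
Require Import Defs.
From mathcomp Require Import all_boot all_order all_algebra.
From mathcomp Require Import classical_sets reals.
From mathcomp Require Import lra ring zify.
Set Implicit Arguments. Unset Strict Implicit. Unset Printing Implicit Defensive.
Import Order.TTheory GRing.Theory Num.Theory.
Local Open Scope ring_scope.
Local Open Scope classical_set_scope.

Definition Dt (R : realType) (a b : pt R) : R := a.1*b.2 - a.2*b.1.
Definition sc (R : realType) (v a b x : pt R) : R :=
  ((x.1 - v.1)*b.2 - (x.2 - v.2)*b.1) / Dt a b.
Definition tc (R : realType) (v a b x : pt R) : R :=
  (a.1*(x.2 - v.2) - a.2*(x.1 - v.1)) / Dt a b.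
Definition rec (R : realType) (v a b : pt R) (s t : R) : pt R :=
  padd v (padd (pscale s a) (pscale t b)).

Lemma sc_rec (R : realType) (v a b : pt R) s t : Dt a b != 0 ->
  sc v a b (rec v a b s t) = s.
Proof. move=> hD; rewrite /sc /rec /padd /pscale /=; move: hD; rewrite /Dt => hD; by field. Qed.

Lemma tc_rec (R : realType) (v a b : pt R) s t : Dt a b != 0 ->
  tc v a b (rec v a b s t) = t.
Proof. move=> hD; rewrite /tc /rec /padd /pscale /=; move: hD; rewrite /Dt => hD; by field. Qed.

Lemma rec_sc (R : realType) (v a b x : pt R) : Dt a b != 0 ->
  rec v a b (sc v a b x) (tc v a b x) = x.
Proof.
move=> hD; case: x => x1 x2; rewrite /sc /tc /rec /padd /pscale /=.
move: hD; rewrite /Dt => hD; congr pair; by field.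
Qed.

Lemma pt_eq (R : realType) (v a b p q : pt R) : Dt a b != 0 ->
  sc v a b p = sc v a b q -> tc v a b p = tc v a b q -> p = q.
Proof. by move=> hD e1 e2; rewrite -(rec_sc v p hD) -(rec_sc v q hD) e1 e2. Qed.

Lemma sc_comb (R : realType) (v a b p q : pt R) t : Dt a b != 0 ->
  sc v a b (pcomb t p q) = (1 - t) * sc v a b p + t * sc v a b q.
Proof. move=> hD; rewrite /sc /pcomb /padd /pscale /=; move: hD; rewrite /Dt => hD; by field. Qed.

Lemma tc_comb (R : realType) (v a b p q : pt R) t : Dt a b != 0 ->
  tc v a b (pcomb t p q) = (1 - t) * tc v a b p + t * tc v a b q.
Proof. move=> hD; rewrite /tc /pcomb /padd /pscale /=; move: hD; rewrite /Dt => hD; by field. Qed.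

Lemma sc_add (R : realType) (v a b x d : pt R) : Dt a b != 0 ->
  sc v a b (padd x d) = sc v a b x + (d.1 * (b.2 / Dt a b) + d.2 * (- b.1 / Dt a b)).
Proof. move=> hD; rewrite /sc /padd /=; move: hD; rewrite /Dt => hD; by field. Qed.

Lemma tc_add (R : realType) (v a b x d : pt R) : Dt a b != 0 ->
  tc v a b (padd x d) = tc v a b x + (d.1 * (- a.2 / Dt a b) + d.2 * (a.1 / Dt a b)).
Proof. move=> hD; rewrite /tc /padd /=; move: hD; rewrite /Dt => hD; by field. Qed.

Lemma P_iff (R : realType) (v a b x : pt R) : Dt a b != 0 ->
  parallelogram v a b x <-> (0 <= sc v a b x <= 1 /\ 0 <= tc v a b x <= 1).
Proof.
move=> hD; split.
  case=> s [t [hs [ht ->]]].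
  by rewrite -/(rec v a b s t) sc_rec // tc_rec.
case=> hs ht; exists (sc v a b x), (tc v a b x); do 2 split => //.
by rewrite -/(rec v a b _ _) rec_sc.
Qed.
Definition Sq (R : realType) (K : set (pt R)) (y : pt R) (e : R) : Prop :=
  forall d : pt R, `|d.1| <= e -> `|d.2| <= e -> K (padd y d).

Lemma Sq_mono (R : realType) (K : set (pt R)) (y : pt R) (e e' : R) : e' <= e -> Sq K y e -> Sq K y e'.
Proof. move=> he H d h1 h2; apply: H; exact: le_trans he. Qed.

Lemma sq_abs (R : realType) (u w e : R) : 0 < e -> u * u + w * w < e * e -> -e <= u <= e.
Proof. move=> he h; have h2 : u * u < e * e by nra.
apply/andP; split; nra. Qed.

Lemma Sq_relint (R : realType) (K : set (pt R)) (y : pt R) (e : R) : 0 < e -> Sq K y e -> relint K y.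
Proof.
move=> e0 H; split.
  have -> : y = padd y (0, 0) by rewrite /padd /= !addr0; case: (y).
  by apply: H; rewrite /= normr0 ltW.
exists e; split => // z _ hz.
have -> : z = padd y (z.1 - y.1, z.2 - y.2).
  by case: z hz => z1 z2 _; rewrite /padd /=; congr pair; ring.
move: hz; rewrite !expr2 => hz.
apply: H => /=; rewrite ler_norml.
  exact: (sq_abs e0 hz).
by apply: (@sq_abs _ _ (z.1 - y.1) _ e0); lra.
Qed.

Lemma conv3 (R : realType) (K : set (pt R)) (p0 p1 p2 : pt R) (x1 x2 : R) :
  convex_set K -> K p0 -> K p1 -> K p2 -> 0 <= x1 -> 0 <= x2 -> x1 + x2 <= 1 ->
  K (p0.1 + x1 * (p1.1 - p0.1) + x2 * (p2.1 - p0.1),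
     p0.2 + x1 * (p1.2 - p0.2) + x2 * (p2.2 - p0.2)).
Proof.
move=> cK h0 h1 h2 hx1 hx2 hs.
have [r0|rp] := eqVneq (x1 + x2) 0.
  have e1 : x1 = 0 by lra.
  have e2 : x2 = 0 by lra.
  by rewrite e1 e2 !mul0r !addr0; case: p0 h0.
have rpos : 0 < x1 + x2 by rewrite lt_def rp /=; lra.
have hq := cK p1 p2 (x2 / (x1 + x2)) h1 h2.
have hq' : K (pcomb (x2 / (x1 + x2)) p1 p2).
  apply: hq; apply/andP; split; first by apply: divr_ge0; lra.
  by rewrite ler_pdivrMr // mul1r; lra.
have := cK p0 _ (x1 + x2) h0 hq'; rewrite /pcomb /padd /pscale /=.
have E : forall u w z : R, (1 - (x1 + x2)) * u + (x1 + x2) * ((1 - x2 / (x1 + x2)) * w + x2 / (x1 + x2) * z)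
   = u + x1 * (w - u) + x2 * (z - u).
  by move=> u w z; field.
rewrite !E.
by apply; apply/andP; split; lra.
Qed.

Lemma Sq3 (R : realType) (K : set (pt R)) (p0 p1 p2 : pt R) (x1 x2 e : R) :
  convex_set K -> Sq K p0 e -> Sq K p1 e -> Sq K p2 e -> 0 <= x1 -> 0 <= x2 -> x1 + x2 <= 1 ->
  Sq K (p0.1 + x1 * (p1.1 - p0.1) + x2 * (p2.1 - p0.1),
        p0.2 + x1 * (p1.2 - p0.2) + x2 * (p2.2 - p0.2)) e.
Proof.
move=> cK h0 h1 h2 hx1 hx2 hs d d1 d2.
have := conv3 cK (h0 d d1 d2) (h1 d d1 d2) (h2 d d1 d2) hx1 hx2 hs.
rewrite /padd /=.
have E : forall u w z du : R, u + du + x1 * (w + du - (u + du)) + x2 * (z + du - (u + du))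
  = u + x1 * (w - u) + x2 * (z - u) + du by move=> *; ring.
by rewrite !E.
Qed.

Lemma Sq_seg (R : realType) (K : set (pt R)) (z x : pt R) (e mu : R) :
  convex_set K -> Sq K z e -> K x -> 0 <= mu < 1 -> Sq K (pcomb mu z x) ((1 - mu) * e).
Proof.
move=> cK hz hx /andP[m0 m1] d d1 d2.
have mp : 0 < 1 - mu by lra.
have hz' := hz (d.1 / (1 - mu), d.2 / (1 - mu)).
have := cK _ _ mu (hz' _ _) hx; rewrite /pcomb /padd /pscale /=.
have E : forall u w du : R, (1 - mu) * (u + du / (1 - mu)) + mu * w = (1 - mu) * u + mu * w + du.
  by move=> *; field; lra.
rewrite !E; apply => //; last by apply/andP; split; lra.
  by rewrite /= normrM normfV (gtr0_norm mp) ler_pdivrMr // mulrC.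
by rewrite /= normrM normfV (gtr0_norm mp) ler_pdivrMr // mulrC.
Qed.


Lemma pcomb_rec (R : realType) (v a b : pt R) (r s1 t1 s2 t2 : R) :
  pcomb r (rec v a b s1 t1) (rec v a b s2 t2) = rec v a b ((1-r)*s1 + r*s2) ((1-r)*t1 + r*t2).
Proof. rewrite /pcomb /rec /padd /pscale /=; congr pair; ring. Qed.

Lemma P_rec (R : realType) (v a b : pt R) (s t : R) :
  0 <= s <= 1 -> 0 <= t <= 1 -> parallelogram v a b (rec v a b s t).
Proof. by move=> hs ht; exists s, t. Qed.

Lemma P_convex (R : realType) (v a b : pt R) : convex_set (parallelogram v a b).
Proof.
move=> p q r [s1 [t1 [hs1 [ht1 ->]]]] [s2 [t2 [hs2 [ht2 ->]]]] /andP[r0 r1].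
rewrite -!/(rec v a b _ _) pcomb_rec; apply: P_rec.
  move: hs1 hs2 => /andP[? ?] /andP[? ?]; apply/andP; split; nra.
move: ht1 ht2 => /andP[? ?] /andP[? ?]; apply/andP; split; nra.
Qed.

Lemma aff_all (R : realType) (v a b y : pt R) : Dt a b != 0 ->
  aff_hull (parallelogram v a b) y.
Proof.
move=> hD A hA hK.
have h01 : 0 <= (0:R) <= 1 by apply/andP; split; lra.
have h11 : 0 <= (1:R) <= 1 by apply/andP; split; lra.
have A00 := hK _ (P_rec v a b h01 h01).
have A10 := hK _ (P_rec v a b h11 h01).
have A01 := hK _ (P_rec v a b h01 h11).
have As := hA _ _ (2 * sc v a b y) A00 A10.
have At := hA _ _ (2 * tc v a b y) A00 A01.
rewrite !pcomb_rec in As At.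
have := hA _ _ (1/2) As At; rewrite pcomb_rec.
have -> : (1 - 1 / 2) * ((1 - 2 * sc v a b y) * 0 + 2 * sc v a b y * 1) +
    1 / 2 * ((1 - 2 * tc v a b y) * 0 + 2 * tc v a b y * 0) = sc v a b y by field.
have -> : (1 - 1 / 2) * ((1 - 2 * sc v a b y) * 0 + 2 * sc v a b y * 0) +
    1 / 2 * ((1 - 2 * tc v a b y) * 0 + 2 * tc v a b y * 1) = tc v a b y by field.
by rewrite rec_sc.
Qed.

Lemma small_step (R : realType) (e : R) (d : pt R) : 0 < e ->
  exists dl : R, 0 < dl /\ (dl * d.1) ^+ 2 + (dl * d.2) ^+ 2 < e ^+ 2.
Proof.
move=> he; set N := `|d.1| + `|d.2| + 1.
have Np : 0 < N by rewrite /N; have := normr_ge0 d.1; have := normr_ge0 d.2; lra.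
exists (e / (2 * N)); split; first by apply: divr_gt0 => //; lra.
have h1 : (d.1) ^+ 2 <= N ^+ 2.
  rewrite -real_normK ?num_real //; apply: lerXn2r; rewrite ?nnegrE ?normr_ge0 ?ltW //.
  rewrite /N; have := normr_ge0 d.2; lra.
have h2 : (d.2) ^+ 2 <= N ^+ 2.
  rewrite -real_normK ?num_real //; apply: lerXn2r; rewrite ?nnegrE ?normr_ge0 ?ltW //.
  rewrite /N; have := normr_ge0 d.1; lra.
rewrite !exprMn.
have E : (e / (2 * N)) ^+ 2 * N ^+ 2 = e ^+ 2 / 4 by field; lra.
have q0 : 0 <= (e / (2 * N)) ^+ 2 by apply: sqr_ge0.
have : (e / (2 * N)) ^+ 2 * d.1 ^+ 2 <= e ^+ 2 / 4 by rewrite -E; apply: ler_wpM2l.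
have : (e / (2 * N)) ^+ 2 * d.2 ^+ 2 <= e ^+ 2 / 4 by rewrite -E; apply: ler_wpM2l.
have : 0 < e ^+ 2 by apply: exprn_gt0.
lra.
Qed.

Lemma relint_open (R : realType) (v a b y : pt R) : Dt a b != 0 ->
  relint (parallelogram v a b) y ->
  (0 < sc v a b y < 1) /\ (0 < tc v a b y < 1).
Proof.
move=> hD [hy [e [he H]]].
have step : forall d : pt R, exists dl, 0 < dl /\ parallelogram v a b (padd y (pscale dl d)).
  move=> d; have [dl [dl0 hdl]] := small_step d he; exists dl; split => //.
  apply: H; first exact: aff_all.
  by rewrite /padd /pscale /=; move: hdl; congr (_ ^+ 2 + _ ^+ 2 < _); ring.
have Es : forall dl (d : pt R), sc v a b (padd y (pscale dl d)) = sc v a b y + dl * sc 0 a b d.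
  by move=> dl d; rewrite /sc /padd /pscale /=; move: hD; rewrite /Dt => hD; field.
have Et : forall dl (d : pt R), tc v a b (padd y (pscale dl d)) = tc v a b y + dl * tc 0 a b d.
  by move=> dl d; rewrite /tc /padd /pscale /=; move: hD; rewrite /Dt => hD; field.
have sa : sc 0 a b a = 1 by rewrite /sc /=; move: hD; rewrite /Dt => hD; field.
have sna : sc 0 a b (- a.1, - a.2) = -1 by rewrite /sc /=; move: hD; rewrite /Dt => hD; field.
have tb : tc 0 a b b = 1 by rewrite /tc /=; move: hD; rewrite /Dt => hD; field.
have tnb : tc 0 a b (- b.1, - b.2) = -1 by rewrite /tc /=; move: hD; rewrite /Dt => hD; field.
have [d1 [d10 /(P_iff _ _ hD) [h1 _]]] := step a.
have [d2 [d20 /(P_iff _ _ hD) [h2 _]]] := step (- a.1, - a.2).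
have [d3 [d30 /(P_iff _ _ hD) [_ h3]]] := step b.
have [d4 [d40 /(P_iff _ _ hD) [_ h4]]] := step (- b.1, - b.2).
rewrite Es sa in h1; rewrite Es sna in h2; rewrite Et tb in h3; rewrite Et tnb in h4.
move: h1 h2 h3 h4 => /andP[? ?] /andP[? ?] /andP[? ?] /andP[? ?].
split; apply/andP; split; lra.
Qed.


Lemma lin_bound (R : realType) (d1 d2 x y e : R) :
  `|d1| <= e -> `|d2| <= e -> `|d1 * x + d2 * y| <= e * (`|x| + `|y|).
Proof.
move=> h1 h2; apply: le_trans (ler_normD _ _) _; rewrite !normrM mulrDr.
apply: lerD; apply: ler_wpM2r => //; exact: normr_ge0.
Qed.

Lemma open_Sq (R : realType) (v a b y : pt R) : Dt a b != 0 ->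
  0 < sc v a b y < 1 -> 0 < tc v a b y < 1 ->
  exists e : R, 0 < e /\ Sq (parallelogram v a b) y e.
Proof.
move=> hD /andP[s0 s1] /andP[t0 t1].
set m := Num.min (Num.min (sc v a b y) (1 - sc v a b y)) (Num.min (tc v a b y) (1 - tc v a b y)).
have m0 : 0 < m by rewrite /m !lt_min; apply/andP; split; apply/andP; split; lra.
have ms : m <= sc v a b y /\ m <= 1 - sc v a b y /\ m <= tc v a b y /\ m <= 1 - tc v a b y.
  by rewrite /m !ge_min !lexx /= !orbT.
set B1 := `|b.2 / Dt a b| + `|- b.1 / Dt a b|.
set B2 := `|- a.2 / Dt a b| + `|a.1 / Dt a b|.
have B10 : 0 <= B1 by rewrite /B1; have := normr_ge0 (b.2 / Dt a b); have := normr_ge0 (- b.1 / Dt a b); lra.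
have B20 : 0 <= B2 by rewrite /B2; have := normr_ge0 (- a.2 / Dt a b); have := normr_ge0 (a.1 / Dt a b); lra.
set N := B1 + B2 + 1.
have N0 : 0 < N by rewrite /N; lra.
exists (m / N); split; first exact: divr_gt0.
move=> d d1 d2; apply/(P_iff _ _ hD).
have hs := lin_bound (b.2 / Dt a b) (- b.1 / Dt a b) d1 d2.
have ht := lin_bound (- a.2 / Dt a b) (a.1 / Dt a b) d1 d2.
rewrite -/B1 in hs; rewrite -/B2 in ht.
have eN : m / N * N = m by field; lra.
have e0 : 0 <= m / N by apply: divr_ge0; lra.
have hs' : m / N * B1 < m.
  have : m / N * B1 <= m / N * (N - 1) by apply: ler_wpM2l => //; rewrite /N; lra.
  have : 0 < m / N by apply: divr_gt0.
  nra.
have ht' : m / N * B2 < m.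
  have : m / N * B2 <= m / N * (N - 1) by apply: ler_wpM2l => //; rewrite /N; lra.
  have : 0 < m / N by apply: divr_gt0.
  nra.
rewrite sc_add // tc_add //.
move: hs ht; rewrite !ler_norml => /andP[? ?] /andP[? ?].
case: ms => [? [? [? ?]]].
split; apply/andP; split; lra.
Qed.

Definition EC (R : realType) (i : nat) (x y : R) : Prop :=
  match i with
  | 0 => y = 0 /\ 0 < x < 1
  | 1 => x = 1 /\ 0 < y < 1
  | 2 => y = 1 /\ 0 < x < 1
  | _ => x = 0 /\ 0 < y < 1
  end.

Definition cs (R : realType) (k : nat) : R := match k with 0 => 0 | 1 => 1 | 2 => 1 | _ => 0 end.
Definition ct (R : realType) (k : nat) : R := match k with 0 => 0 | 1 => 0 | 2 => 1 | _ => 1 end.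

Lemma pcorner_rec (R : realType) (v a b : pt R) k :
  pcorner v a b k = rec v a b (cs R k) (ct R k).
Proof.
case: k => [|[|[|k]]]; rewrite /rec /padd /pscale /= ?mul0r ?mul1r ?addr0 ?add0r //.
by case: (v).
Qed.

Lemma facet_EC (R : realType) (v a b x : pt R) (i : 'I_4) : Dt a b != 0 ->
  facet_relint v a b i x -> EC i (sc v a b x) (tc v a b x).
Proof.
move=> hD; rewrite /facet_relint /open_segment.
case=> t [/andP[t0 t1] ->]; rewrite sc_comb // tc_comb // !pcorner_rec !sc_rec // !tc_rec //.
case: i => [[|[|[|[|//]]]] Hi] /=; split; rewrite ?mulr0 ?mulr1 ?addr0 ?add0r; try ring;
  apply/andP; split; lra.
Qed.


Definition CS (R : realType) (p0s ss ts : R) (j : nat) : R :=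
  match j with 0 => p0s | 1 => p0s + ss | 2 => p0s + ss + ts | _ => p0s + ts end.

Definition shapeA (R : realType) (xs xt ys yt : R) : Prop :=
  ((0 < xt /\ 0 < yt /\ xt + yt = 1) \/ (xt < 0 /\ yt < 0 /\ xt + yt = -1)) /\
  ((0 < xs /\ ys < 0 /\ xs - ys = 1) \/ (xs < 0 /\ 0 < ys /\ ys - xs = 1)).

Lemma shapeL (R : realType) (p0s p0t ss st ts tt : R) (j0 j1 j2 j3 : nat) :
  (j0 < 4)%N -> (j1 < 4)%N -> (j2 < 4)%N -> (j3 < 4)%N ->
  EC 0 (CS p0s ss ts j0) (CS p0t st tt j0) ->
  EC 1 (CS p0s ss ts j1) (CS p0t st tt j1) ->
  EC 2 (CS p0s ss ts j2) (CS p0t st tt j2) ->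
  EC 3 (CS p0s ss ts j3) (CS p0t st tt j3) ->
  shapeA ss st ts tt \/ shapeA st ss tt ts.
Proof.
case: j0 => [|[|[|[|//]]]] _; case: j1 => [|[|[|[|//]]]] _;
case: j2 => [|[|[|[|//]]]] _; case: j3 => [|[|[|[|//]]]] _ /=;
move=> [? /andP[? ?]] [? /andP[? ?]] [? /andP[? ?]] [? /andP[? ?]];
rewrite /shapeA;
first [ exfalso; lra
      | left; split; [left | left]; repeat split; lra
      | left; split; [left | right]; repeat split; lra
      | left; split; [right | left]; repeat split; lra
      | left; split; [right | right]; repeat split; lra
      | right; split; [left | left]; repeat split; lra
      | right; split; [left | right]; repeat split; lra
      | right; split; [right | left]; repeat split; lra
      | right; split; [right | right]; repeat split; lra ].
Qed.

Lemma KL (R : realType) (xs xt ys yt K L : R) : shapeA xs xt ys yt ->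
  (1 <= K \/ K <= -1) -> (1 <= L \/ L <= -1) ->
  (1 <= K * xs + L * ys \/ K * xs + L * ys <= -1) \/
  (1 <= K * xt + L * yt \/ K * xt + L * yt <= -1).
Proof.
move=> [[[? [? ?]]|[? [? ?]]] [[? [? ?]]|[? [? ?]]]] [?|?] [?|?];
  first [ left; left; nra | left; right; nra | right; left; nra | right; right; nra ].
Qed.

Lemma int_abs1 (R : realType) (k : int) : k != 0 -> 1 <= (k%:~R : R) \/ (k%:~R : R) <= -1.
Proof.
move=> hk; have [h|h] : (1 <= k \/ k <= -1)%R by lia.
  by left; rewrite ler1z.
right; have : (1 <= - k)%R by lia.
by rewrite -(ler1z R) rmorphN; lra.
Qed.

Lemma intfin (k1 l1 k2 l2 : int) : (k1 = 0 \/ l1 = 0) -> (k2 = 0 \/ l2 = 0) ->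
  (k2 - k1 = 0 \/ l2 - l1 = 0) -> k1 * l2 - k2 * l1 != 0 -> False.
Proof. move=> [->|->] [->|->] [|]; rewrite ?subr0 ?sub0r ?mul0r ?mulr0 ?subrr; try lia. Qed.

Lemma coeffs (m11 m12 m21 m22 n1 n2 : int) : unimodular m11 m12 m21 m22 ->
  exists k l : int, n1 = k * m11 + l * m12 /\ n2 = k * m21 + l * m22.
Proof.
move=> hM; set dM := m11 * m22 - m12 * m21.
have d2 : dM * dM = 1 by rewrite /dM; case: hM => ->; lia.
exists (dM * (n1 * m22 - n2 * m12)), (dM * (m11 * n2 - m21 * n1)); split.
  by apply/eqP; rewrite -subr_eq0; apply/eqP;
     transitivity (n1 * (1 - dM * dM)); [rewrite /dM; ring | rewrite d2 subrr mulr0].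
by apply/eqP; rewrite -subr_eq0; apply/eqP;
   transitivity (n2 * (1 - dM * dM)); [rewrite /dM; ring | rewrite d2 subrr mulr0].
Qed.


Lemma sc_umap (R : realType) (v a b q : pt R) (m11 m12 m21 m22 : int) (x : pt R) : Dt a b != 0 ->
  sc v a b (umap m11 m12 m21 m22 q x) = sc v a b q + x.1 * sc 0 a b (m11%:~R, m21%:~R)
     + x.2 * sc 0 a b (m12%:~R, m22%:~R).
Proof. move=> hD; rewrite /sc /umap /=; move: hD; rewrite /Dt => hD; by field. Qed.

Lemma tc_umap (R : realType) (v a b q : pt R) (m11 m12 m21 m22 : int) (x : pt R) : Dt a b != 0 ->
  tc v a b (umap m11 m12 m21 m22 q x) = tc v a b q + x.1 * tc 0 a b (m11%:~R, m21%:~R)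
     + x.2 * tc 0 a b (m12%:~R, m22%:~R).
Proof. move=> hD; rewrite /tc /umap /=; move: hD; rewrite /Dt => hD; by field. Qed.

Lemma sc_lin (R : realType) (a b : pt R) (k l x1 x2 y1 y2 : R) : Dt a b != 0 ->
  sc 0 a b (k * x1 + l * y1, k * x2 + l * y2) = k * sc 0 a b (x1, x2) + l * sc 0 a b (y1, y2).
Proof. move=> hD; rewrite /sc /=; move: hD; rewrite /Dt => hD; by field. Qed.

Lemma tc_lin (R : realType) (a b : pt R) (k l x1 x2 y1 y2 : R) : Dt a b != 0 ->
  tc 0 a b (k * x1 + l * y1, k * x2 + l * y2) = k * tc 0 a b (x1, x2) + l * tc 0 a b (y1, y2).
Proof. move=> hD; rewrite /tc /=; move: hD; rewrite /Dt => hD; by field. Qed.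

Lemma axis (R : realType) (ss st ts tt : R) (k l : int) :
  shapeA ss st ts tt \/ shapeA st ss tt ts ->
  -1 < k%:~R * ss + l%:~R * ts < 1 -> -1 < k%:~R * st + l%:~R * tt < 1 ->
  k = 0 \/ l = 0.
Proof.
move=> hsh /andP[h1 h2] /andP[h3 h4].
case: (eqVneq k 0) => hk; first by left.
case: (eqVneq l 0) => hl; first by right.
have := int_abs1 R hk; have := int_abs1 R hl => hL hK.
exfalso; case: hsh => hs; have := KL hs hK hL; lra.
Qed.

Lemma cast_col (R : realType) (m11 m12 m21 m22 n1 n2 k l : int) :
  n1 = k * m11 + l * m12 -> n2 = k * m21 + l * m22 ->
  ((n1%:~R : R), (n2%:~R : R)) =
  (k%:~R * m11%:~R + l%:~R * m12%:~R, k%:~R * m21%:~R + l%:~R * m22%:~R).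
Proof. by move=> -> -> /=; rewrite !rmorphD !rmorphM. Qed.

Lemma free_P (R : realType) (v a b q : pt R) (m11 m12 m21 m22 : int) :
  Dt a b != 0 -> unimodular m11 m12 m21 m22 ->
  (shapeA (sc 0 a b (m11%:~R, m21%:~R)) (tc 0 a b (m11%:~R, m21%:~R))
          (sc 0 a b (m12%:~R, m22%:~R)) (tc 0 a b (m12%:~R, m22%:~R)) \/
   shapeA (tc 0 a b (m11%:~R, m21%:~R)) (sc 0 a b (m11%:~R, m21%:~R))
          (tc 0 a b (m12%:~R, m22%:~R)) (sc 0 a b (m12%:~R, m22%:~R))) ->
  R_Delta2_free (parallelogram v a b).
Proof.
move=> hD hM hsh; split; first exact: P_convex.
move=> [n11 [n12 [n21 [n22 [b0 [hN H]]]]]].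
have D00 : @Delta2 R ((0, 0) : pt R) by rewrite /Delta2 /=; lra.
have D10 : @Delta2 R ((1, 0) : pt R) by rewrite /Delta2 /=; lra.
have D01 : @Delta2 R ((0, 1) : pt R) by rewrite /Delta2 /=; lra.
have [s0 t0] := relint_open hD (H _ (ex_intro2 _ _ _ D00 erefl)).
have [s1 t1] := relint_open hD (H _ (ex_intro2 _ _ _ D10 erefl)).
have [s2 t2] := relint_open hD (H _ (ex_intro2 _ _ _ D01 erefl)).
rewrite !sc_umap // !tc_umap // /= in s0 t0 s1 t1 s2 t2.
have [k1 [l1 [e11 e21]]] := coeffs n11 n21 hM.
have [k2 [l2 [e12 e22]]] := coeffs n12 n22 hM.
rewrite (cast_col R e11 e21) (cast_col R e12 e22) !sc_lin // !tc_lin // in s0 t0 s1 t1 s2 t2.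
set SS := sc 0 a b _ in s0 s1 s2 hsh; set TS := sc 0 a b _ in s0 s1 s2 hsh.
set ST := tc 0 a b _ in t0 t1 t2 hsh; set TT := tc 0 a b _ in t0 t1 t2 hsh.
move: s0 t0 s1 t1 s2 t2 => /andP[? ?] /andP[? ?] /andP[? ?] /andP[? ?] /andP[? ?] /andP[? ?].
have A1 : k1 = 0 \/ l1 = 0.
  apply: (axis hsh); apply/andP; split; lra.
have A2 : k2 = 0 \/ l2 = 0.
  apply: (axis hsh); apply/andP; split; lra.
have A3 : k2 - k1 = 0 \/ l2 - l1 = 0.
  apply: (axis hsh); rewrite !rmorphB /=; apply/andP; split; lra.
apply: (intfin A1 A2 A3); apply/eqP => h0.
have : n11 * n22 - n12 * n21 = (k1 * l2 - k2 * l1) * (m11 * m22 - m12 * m21).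
  by rewrite e11 e21 e12 e22; ring.
by rewrite h0 mul0r; case: hN => ->.
Qed.


Lemma L0 (R : realType) (cs ct ds dt xs xt : R) :
  ct = 0 -> 0 < cs < 1 -> 0 < dt <= 1 -> 0 <= ds <= 1 -> xt < 0 ->
  exists eta mu zs zt : R, 0 < eta < 1 /\ 0 <= mu < 1 /\ 0 < zs < 1 /\ 0 < zt < 1 /\
    (1 + eta) * cs - eta * ds = (1 - mu) * zs + mu * xs /\
    (1 + eta) * ct - eta * dt = (1 - mu) * zt + mu * xt.
Proof.
move=> -> /andP[c0 c1] /andP[d0 d1] /andP[e0 e1] hx.
set h := - xt.
have h0 : 0 < h by rewrite /h; lra.
set m := Num.min cs (1 - cs).
have m0 : 0 < m by rewrite /m lt_min; apply/andP; split; lra.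
have [mc mc'] : m <= cs /\ m <= 1 - cs by rewrite /m !ge_min !lexx /= orbT.
set X := `|xs| + 1.
have X1 : 1 <= X by rewrite /X; have := normr_ge0 xs; lra.
have xsX : - (X - 1) <= xs <= X - 1 by rewrite /X addrK -ler_norml.
move: xsX => /andP[xa xb].
set eta := m * h / (8 * X * (1 + h)).
have eta0 : 0 < eta by rewrite /eta; apply: divr_gt0; [apply: mulr_gt0 | apply: mulr_gt0; lra].
have etaE : eta * (8 * X * (1 + h)) = m * h by rewrite /eta; field; lra.
have eta1 : 8 * eta <= m.
  have E1 : 8 * eta * X * (1 + h) = m * h by rewrite -etaE; ring.
  have p : 0 <= 8 * eta * (1 + h) by nra.
  have E2 : 8 * eta * (1 + h) <= m * h by rewrite -E1; nra.
  have E3 : (8 * eta - m) * (1 + h) <= - m by nra.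
  have [//|hc] := lerP (8 * eta) m.
  have : 0 <= (8 * eta - m) * (1 + h) by apply: mulr_ge0; lra.
  lra.
set mu := 2 * eta * dt / h.
have muE : mu * h = 2 * eta * dt by rewrite /mu; field; lra.
have mu0 : 0 <= mu by rewrite /mu; apply: divr_ge0; [nra | lra].
have muX : 4 * mu * X <= m.
  have E0 : 4 * mu * X * h = 4 * X * (mu * h) by ring.
  have E1 : 4 * mu * X * h = 8 * eta * X * dt by rewrite E0 muE; ring.
  have p : 0 <= 8 * eta * X by nra.
  have E2 : 8 * eta * X * dt <= 8 * eta * X * (1 + h) by apply: ler_wpM2l => //; lra.
  have E3 : 4 * mu * X * h <= m * h by rewrite E1 -etaE; lra.
  have [//|hc] := lerP (4 * mu * X) m.
  have : 0 < (4 * mu * X - m) * h by apply: mulr_gt0; lra.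
  lra.
have mu1 : mu <= 1 / 8 by nra.
exists eta, mu, (((1 + eta) * cs - eta * ds - mu * xs) / (1 - mu)), (eta * dt / (1 - mu)).
have mp : 0 < 1 - mu by lra.
split; first by apply/andP; split; nra.
split; first by apply/andP; split; lra.
have hN0 : 0 < (1 + eta) * cs - eta * ds - mu * xs by nra.
have hN1 : (1 + eta) * cs - eta * ds - mu * xs < 1 - mu by nra.
split.
  apply/andP; split; first exact: divr_gt0.
  by rewrite ltr_pdivrMr // mul1r.
split.
  apply/andP; split; first by apply: divr_gt0 => //; nra.
  by rewrite ltr_pdivrMr // mul1r; nra.
split; first by field; lra.
have : mu * xt = - (2 * eta * dt) by rewrite -muE /h; ring.
move=> hm; rewrite hm; field; lra.
Qed.


Definition Out (R : realType) (i : nat) (x y : R) : Prop :=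
  match i with 0 => y < 0 | 1 => 1 < x | 2 => 1 < y | _ => x < 0 end.

Lemma Lgen (R : realType) (i0 i1 : nat) (cs ct ds dt xs xt : R) :
  (i0 < 4)%N -> (i1 < 4)%N -> i1 <> i0 ->
  EC i0 cs ct -> EC i1 ds dt -> Out i0 xs xt ->
  exists eta mu zs zt : R, 0 < eta < 1 /\ 0 <= mu < 1 /\ 0 < zs < 1 /\ 0 < zt < 1 /\
    (1 + eta) * cs - eta * ds = (1 - mu) * zs + mu * xs /\
    (1 + eta) * ct - eta * dt = (1 - mu) * zt + mu * xt.
Proof.
case: i0 => [|[|[|[|//]]]] _ hi1 hne /= [hc /andP[c0 c1]] hd hx.
- have [d0 d1] : 0 < dt <= 1 /\ 0 <= ds <= 1.
    by move: hd hne; case: i1 hi1 => [|[|[|[|//]]]] _ /= [? /andP[? ?]] // _; split; apply/andP; split; lra.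
  by apply: L0 => //; apply/andP; split.
- have [d0 d1] : 0 < 1 - ds <= 1 /\ 0 <= dt <= 1.
    by move: hd hne; case: i1 hi1 => [|[|[|[|//]]]] _ /= [? /andP[? ?]] // _; split; apply/andP; split; lra.
  have := @L0 R ct (1 - cs) dt (1 - ds) xt (1 - xs).
  case; [lra | by apply/andP; split | by [] | by [] | lra |].
  move=> eta [mu [zs [zt [he [hm [hzs [hzt [E1 E2]]]]]]]].
  exists eta, mu, (1 - zt), zs; split => //; split => //.
  split; first by move: hzt => /andP[? ?]; apply/andP; split; lra.
  split => //.
  split; lra.
- have [d0 d1] : 0 < 1 - dt <= 1 /\ 0 <= 1 - ds <= 1.
    by move: hd hne; case: i1 hi1 => [|[|[|[|//]]]] _ /= [? /andP[? ?]] // _; split; apply/andP; split; lra.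
  have := @L0 R (1 - cs) (1 - ct) (1 - ds) (1 - dt) (1 - xs) (1 - xt).
  case; [lra | by apply/andP; split; lra | by [] | by [] | lra |].
  move=> eta [mu [zs [zt [he [hm [hzs [hzt [E1 E2]]]]]]]].
  exists eta, mu, (1 - zs), (1 - zt); split => //; split => //.
  split; first by move: hzs => /andP[? ?]; apply/andP; split; lra.
  split; first by move: hzt => /andP[? ?]; apply/andP; split; lra.
  split; lra.
- have [d0 d1] : 0 < ds <= 1 /\ 0 <= 1 - dt <= 1.
    by move: hd hne; case: i1 hi1 => [|[|[|[|//]]]] _ /= [? /andP[? ?]] // _; split; apply/andP; split; lra.
  have := @L0 R (1 - ct) cs (1 - dt) ds (1 - xt) xs.
  case; [lra | by apply/andP; split; lra | by [] | by [] | lra |].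
  move=> eta [mu [zs [zt [he [hm [hzs [hzt [E1 E2]]]]]]]].
  exists eta, mu, zt, (1 - zs); split => //; split => //.
  split; first by [].
  split; first by move: hzs => /andP[? ?]; apply/andP; split; lra.
  split; lra.
Qed.

Lemma seg_open (R : realType) (i j : nat) (ps pt' qs qt t : R) :
  (i < 4)%N -> (j < 4)%N -> i <> j -> EC i ps pt' -> EC j qs qt -> 0 < t < 1 ->
  0 < (1 - t) * ps + t * qs < 1 /\ 0 < (1 - t) * pt' + t * qt < 1.
Proof.
case: i => [|[|[|[|//]]]] _; case: j => [|[|[|[|//]]]] _ //= _
  [? /andP[? ?]] [? /andP[? ?]] /andP[? ?]; split; apply/andP; split; nra.
Qed.


Lemma Sq_sub (R : realType) (K K' : set (pt R)) (y : pt R) (e : R) :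
  K `<=` K' -> Sq K y e -> Sq K' y e.
Proof. by move=> s H d d1 d2; apply: s; apply: H. Qed.

Lemma max_core (R : realType) (v a b : pt R) (K : set (pt R)) (x C D C' D' : pt R)
  (i0 i1 i2 i3 : nat) (n11 n12 n21 n22 : int) :
  Dt a b != 0 -> convex_set K -> parallelogram v a b `<=` K -> K x ->
  (i0 < 4)%N -> (i1 < 4)%N -> (i2 < 4)%N -> (i3 < 4)%N -> i1 <> i0 -> i3 <> i2 ->
  EC i0 (sc v a b C) (tc v a b C) -> EC i1 (sc v a b D) (tc v a b D) ->
  EC i2 (sc v a b C') (tc v a b C') -> EC i3 (sc v a b D') (tc v a b D') ->
  Out i0 (sc v a b x) (tc v a b x) ->
  C.1 + C'.1 = D.1 + D'.1 -> C.2 + C'.2 = D.2 + D'.2 ->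
  unimodular n11 n12 n21 n22 ->
  D.1 - C.1 = n11%:~R -> D.2 - C.2 = n21%:~R -> C'.1 - C.1 = n12%:~R -> C'.2 - C.2 = n22%:~R ->
  ~ R_Delta2_free K.
Proof.
move=> hD cK PK hx hi0 hi1 hi2 hi3 hne1 hne3 hC hDD hC' hD' hO s1 s2 hN h11 h21 h12 h22 [_ Hno].
apply: Hno.
have [eta [mu [zs [zt [he [hm [hzs [hzt [E1 E2]]]]]]]]] := Lgen hi0 hi1 hne1 hC hDD hO.
set z0 := rec v a b zs zt.
have [e0 [e00 Sz0]] : exists e : R, 0 < e /\ Sq (parallelogram v a b) z0 e.
  by apply: open_Sq => //; rewrite ?sc_rec ?tc_rec.
have SY0 := Sq_seg cK (Sq_sub PK Sz0) hx hm.
have [o1 o2] := seg_open hi1 hi0 hne1 hDD hC he.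
rewrite -sc_comb // -tc_comb // in o1 o2.
have [e1 [e10 SY1]] := open_Sq hD o1 o2.
have hne3' : i2 <> i3 by move=> h; apply: hne3.
have [o3 o4] := seg_open hi2 hi3 hne3' hC' hD' he.
rewrite -sc_comb // -tc_comb // in o3 o4.
have [e2 [e20 SY2]] := open_Sq hD o3 o4.
have mp : 0 < 1 - mu by move: hm => /andP[? ?]; lra.
set e := Num.min ((1 - mu) * e0) (Num.min e1 e2).
have ep : 0 < e by rewrite /e !lt_min; apply/andP; split; [apply: mulr_gt0 | apply/andP; split].
have [ea [eb ec]] : e <= (1 - mu) * e0 /\ e <= e1 /\ e <= e2.
  by rewrite /e !ge_min !lexx /= !orbT.
have Y0eq : pcomb mu z0 x = pcomb (- eta) C D.
  apply: (@pt_eq _ v a b) => //; rewrite ?sc_comb // ?tc_comb // ?sc_rec ?tc_rec //; lra.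
rewrite Y0eq in SY0.
exists n11, n12, n21, n22, (pcomb (- eta) C D); split => //.
move=> y [z hz <-]; apply: (@Sq_relint _ _ _ e) => //.
case: hz => z1 [z2 z3].
have -> : umap n11 n12 n21 n22 (pcomb (- eta) C D) z =
  ((pcomb (- eta) C D).1 + z.1 * ((pcomb eta D C).1 - (pcomb (- eta) C D).1)
     + z.2 * ((pcomb eta C' D').1 - (pcomb (- eta) C D).1),
   (pcomb (- eta) C D).2 + z.1 * ((pcomb eta D C).2 - (pcomb (- eta) C D).2)
     + z.2 * ((pcomb eta C' D').2 - (pcomb (- eta) C D).2)).
  rewrite /umap -h11 -h21 -h12 -h22 /pcomb /padd /pscale /=.
  have -> : D'.1 = C.1 + C'.1 - D.1 by lra.
  have -> : D'.2 = C.2 + C'.2 - D.2 by lra.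
  congr pair; ring.
apply: Sq3 => //.
- exact: Sq_mono ea SY0.
- exact: Sq_sub PK (Sq_mono eb SY1).
- exact: Sq_sub PK (Sq_mono ec SY2).
Qed.


Lemma sc_corner (R : realType) (v a b q : pt R) (m11 m12 m21 m22 : int) (j : nat) : Dt a b != 0 ->
  sc v a b (umap m11 m12 m21 m22 q (square_corner R j)) =
  CS (sc v a b q) (sc 0 a b (m11%:~R, m21%:~R)) (sc 0 a b (m12%:~R, m22%:~R)) j.
Proof. by move=> hD; rewrite sc_umap //; case: j => [|[|[|j]]] /=; ring. Qed.

Lemma tc_corner (R : realType) (v a b q : pt R) (m11 m12 m21 m22 : int) (j : nat) : Dt a b != 0 ->
  tc v a b (umap m11 m12 m21 m22 q (square_corner R j)) =
  CS (tc v a b q) (tc 0 a b (m11%:~R, m21%:~R)) (tc 0 a b (m12%:~R, m22%:~R)) j.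
Proof. by move=> hD; rewrite tc_umap //; case: j => [|[|[|j]]] /=; ring. Qed.

Lemma corner_cols (R : realType) (q : pt R) (m11 m12 m21 m22 : int) (j : nat) :
  (j < 4)%N -> unimodular m11 m12 m21 m22 ->
  let C := umap m11 m12 m21 m22 q (square_corner R j) in
  let D := umap m11 m12 m21 m22 q (square_corner R ((j + 1) %% 4)) in
  let C' := umap m11 m12 m21 m22 q (square_corner R ((j + 2) %% 4)) in
  let D' := umap m11 m12 m21 m22 q (square_corner R ((j + 3) %% 4)) in
  C.1 + C'.1 = D.1 + D'.1 /\ C.2 + C'.2 = D.2 + D'.2 /\
  exists n11 n12 n21 n22 : int, unimodular n11 n12 n21 n22 /\
    D.1 - C.1 = n11%:~R /\ D.2 - C.2 = n21%:~R /\ C'.1 - C.1 = n12%:~R /\ C'.2 - C.2 = n22%:~R.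
Proof.
move=> hj hM; case: j hj => [|[|[|[|//]]]] _ /=; rewrite /umap /=.
- split; first ring. split; first ring.
  exists m11, (m11 + m12), m21, (m21 + m22); split.
    by case: hM => h; [left|right]; rewrite -h; ring.
  by rewrite !rmorphD; do ! split; ring.
- split; first ring. split; first ring.
  exists m12, (m12 - m11), m22, (m22 - m21); split.
    by case: hM => h; [left|right]; rewrite -h; ring.
  by rewrite !rmorphB; do ! split; ring.
- split; first ring. split; first ring.
  exists (- m11), (- m11 - m12), (- m21), (- m21 - m22); split.
    by case: hM => h; [left|right]; rewrite -h; ring.
  by rewrite !rmorphB !rmorphN; do ! split; ring.
- split; first ring. split; first ring.
  exists (- m12), (m11 - m12), (- m22), (m21 - m22); split.
    by case: hM => h; [left|right]; rewrite -h; ring.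
  by rewrite !rmorphB !rmorphN; do ! split; ring.
Qed.

Definition nx (j : 'I_4) (k : nat) : 'I_4 := Ordinal (ltn_pmod (j + k) (isT : (0 < 4)%N)).

Theorem proposition5p9 (R : realType)
  (m11 m12 m21 m22 : int) (q : pt R) (v a b : pt R) :
  unimodular m11 m12 m21 m22 ->
  a.1 * b.2 - a.2 * b.1 != 0 ->
  (exists sigma : 'I_4 -> 'I_4, injective sigma /\
     forall (i j : 'I_4),
       facet_relint v a b i (umap m11 m12 m21 m22 q (square_corner R j)) <->
       j = sigma i) ->
  max_R_Delta2_free (parallelogram v a b).
Proof.
move=> hM hD0 [sigma [inj H]].
have hD : Dt a b != 0 := hD0.
have EC_of : forall (i j : 'I_4), j = sigma i ->
    EC i (sc v a b (umap m11 m12 m21 m22 q (square_corner R j)))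
         (tc v a b (umap m11 m12 m21 m22 q (square_corner R j))).
  by move=> i j hij; apply: facet_EC => //; apply/(H i j).
have free : R_Delta2_free (parallelogram v a b).
  apply: (@free_P R v a b q m11 m12 m21 m22 hD hM).
  have := EC_of (@Ordinal 4 0 isT) _ erefl.
  have := EC_of (@Ordinal 4 1 isT) _ erefl.
  have := EC_of (@Ordinal 4 2 isT) _ erefl.
  have := EC_of (@Ordinal 4 3 isT) _ erefl.
  move=> h3 h2 h1 h0.
  rewrite !sc_corner // !tc_corner // in h0 h1 h2 h3.
  exact: (shapeL (ltn_ord (sigma (@Ordinal 4 0 isT))) (ltn_ord (sigma (@Ordinal 4 1 isT)))
     (ltn_ord (sigma (@Ordinal 4 2 isT))) (ltn_ord (sigma (@Ordinal 4 3 isT))) h0 h1 h2 h3).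
split => // K hK PK.
apply/seteqP; split => // x hx.
have [g sg gs] := injF_bij inj.
have Hout : forall i0 : 'I_4, Out i0 (sc v a b x) (tc v a b x) -> False.
  move=> i0 hO.
  set j := sigma i0.
  have hj := corner_cols q (ltn_ord j) hM.
  case: hj => s1 [s2 [n11 [n12 [n21 [n22 [hN [h11 [h21 [h12 h22]]]]]]]]].
  have nxv : forall k, nat_of_ord (nx j k) = ((j + k) %% 4)%N by [].
  have E1 := EC_of (g (nx j 1)) (nx j 1) (esym (gs _)).
  have E2 := EC_of (g (nx j 2)) (nx j 2) (esym (gs _)).
  have E3 := EC_of (g (nx j 3)) (nx j 3) (esym (gs _)).
  have E0 := EC_of i0 j erefl.
  rewrite !nxv in E1 E2 E3.
  have jl := ltn_ord j.
  have ne1 : nat_of_ord (g (nx j 1)) <> nat_of_ord i0.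
    move=> /val_inj /(congr1 sigma); rewrite gs -/j => /(congr1 val) /=.
    by move: jl; case: (nat_of_ord j) => [|[|[|[|//]]]].
  have ne3 : nat_of_ord (g (nx j 3)) <> nat_of_ord (g (nx j 2)).
    move=> /val_inj /(congr1 sigma); rewrite !gs => /(congr1 val) /=.
    by move: jl; case: (nat_of_ord j) => [|[|[|[|//]]]].
  exact: (max_core hD (proj1 hK) PK hx (ltn_ord _) (ltn_ord _) (ltn_ord _) (ltn_ord _)
            ne1 ne3 E0 E1 E2 E3 hO s1 s2 hN h11 h21 h12 h22 hK).
apply/(P_iff _ _ hD).
have o0 := Hout (@Ordinal 4 0 isT).
have o1 := Hout (@Ordinal 4 1 isT).
have o2 := Hout (@Ordinal 4 2 isT).
have o3 := Hout (@Ordinal 4 3 isT).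
rewrite /Out /= in o0 o1 o2 o3.
split; apply/andP; split.
- by case: (lerP 0 (sc v a b x)) => // /o3.
- by case: (lerP (sc v a b x) 1) => // /o1.
- by case: (lerP 0 (tc v a b x)) => // /o0.
- by case: (lerP (tc v a b x) 1) => // /o2.
Qed.
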